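(* Let $m\ge 2$ and consider the system $$\frac{du_i}{dt}=-a_iu_i+\sum_{j=1}^m w_{ij}f_j(u_j)+k\,\varphi_i(\rho)\,u_i+J_i-P\sum_{j=1}^m(u_i-u_j),\quad 1\le i\le m,\qquad \frac{d\rho}{dt}=\sum_{i=1}^m\gamma_iu_i-b\rho,$$ with $P>0$; $a_i,b,\beta,\eta_i,k>0$; $w_{ij},J_i,\gamma_i\in\mathbb{R}$; $f_i,\varphi_i$ locally Lipschitz with $a_i>k$, $|f_i(s)|\le\beta$, $\varphi_i(s)=1-\eta_is^2$ for all $s\in\mathbb{R}$, $1\le i\le m$. Define $a=\min_ia_i$, $W=\max_{i,j}|w_{ij}|$, $J=\max_i|J_i|$, $\gamma^2=\max_i\gamma_i^2$, $$C_1=\frac{1}{a-k}\Big(\frac{m\gamma^2}{b}+b\Big),\ C_2=\Big(\frac{m\gamma^2}{b}+b\Big)\frac{m(mW\beta+J)^2}{(a-k)^2},\ \mu_0=b\min\Big\{\frac1{C_1},1\Big\},\ Q=1+\frac{C_2}{\mu_0\min\{C_1,1\}},$$ and $a^*=\max_{i,j}|a_i-a_j|$, $W^*=\max_{i,j,\ell}|w_{i\ell}-w_{j\ell}|$, $\eta^*=\max_{i,j}|\eta_i-\eta_j|$, $J^*=\max_{i,j}|J_i-J_j|$. For $\varepsilon>0$ let $$P^*(\varepsilon)=\frac{1}{m\varepsilon}\big(mW^*\beta+a^*Q^{1/2}+k\eta^*Q^{3/2}+J^*\big).$$ Then for every $\varepsilon>0$, if $P>P^*(\varepsilon)$, $$\sup_{g^0\in\mathbb{R}^{m+1}}\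 \max_{1\le i<j\le m}\ \limsup_{t\to\infty}|u_i(t)-u_j(t)|<\varepsilon,$$ with uniform exponential convergence rate $\mu=a-k+P$, in the sense that there is a constant $D<\varepsilon$ (independent of the initial state) such that for every initial state there is $T\ge0$ with $|u_i(t)-u_j(t)|^2\le e^{-\mu(t-T)}|u_i(T)-u_j(T)|^2+D^2$ for all $t>T$ and all $i\ne j$.
   Context: Here $(u_1,\dots,u_m,\rho)$ denotes the (global) solution with initial state $g^0=(u_1(0),\dots,u_m(0),\rho(0))\in\mathbb{R}^{m+1}$. This is the variant of the memristive Hopfield network in which the sigmoidal weak coupling $-Pu_i\sum_j\Gamma(u_j)$ is replaced by linear (strong) coupling $-P\sum_j(u_i-u_j)$. *)

(* Defs.v *)
From mathcomp Require Import all_boot all_order all_algebra.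
From mathcomp Require Import all_classical all_reals all_analysis.
Set Implicit Arguments. Unset Strict Implicit. Unset Printing Implicit Defensive.
Import Order.TTheory GRing.Theory Num.Theory.
Import numFieldNormedType.Exports.
Local Open Scope classical_set_scope.
Local Open Scope ring_scope.

(* Families are indexed by natural numbers; only the indices i < m matter. *)

Definition locally_lipschitz (R : realType) (f : R -> R) : Prop :=
  forall x : R, exists2 d : R, 0 < d &
    exists L : R, forall y z : R, `|y - x| < d -> `|z - x| < d ->
      `|f y - f z| <= L * `|y - z|.

(* a = min_i a_i  (m >= 1, so a 0 is one of the a_i) *)
Definition amin (R : realType) (m : nat) (a : nat -> R) : R :=
  \big[Num.min/a 0%N]_(i < m) a i.
(* maxima of nonnegative quantities (identity 0) *)
Definition Wmax (R : realType) (m : nat) (w : nat -> nat -> R) : R :=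
  \big[Num.max/0]_(i < m) \big[Num.max/0]_(j < m) `|w i j|.
Definition Jmax (R : realType) (m : nat) (J : nat -> R) : R :=
  \big[Num.max/0]_(i < m) `|J i|.
Definition gamma2 (R : realType) (m : nat) (g : nat -> R) : R :=
  \big[Num.max/0]_(i < m) (g i ^+ 2).
Definition spread (R : realType) (m : nat) (x : nat -> R) : R :=
  \big[Num.max/0]_(i < m) \big[Num.max/0]_(j < m) `|x i - x j|.
Definition Wspread (R : realType) (m : nat) (w : nat -> nat -> R) : R :=
  \big[Num.max/0]_(i < m) \big[Num.max/0]_(j < m) \big[Num.max/0]_(l < m)
     `|w i l - w j l|.

Section Consts.
Variables (R : realType) (m : nat) (a : nat -> R) (b k beta : R)
  (w : nat -> nat -> R) (J gam : nat -> R).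
Definition C1 : R :=
  (amin m a - k)^-1 * (m%:R * gamma2 m gam / b + b).
Definition C2 : R :=
  (m%:R * gamma2 m gam / b + b) *
  (m%:R * (m%:R * Wmax m w * beta + Jmax m J) ^+ 2 / (amin m a - k) ^+ 2).
Definition mu0 : R := b * Num.min (C1^-1) 1.
Definition Qc : R := 1 + C2 / (mu0 * Num.min C1 1).
End Consts.

Definition Pstar (R : realType) (m : nat) (a : nat -> R) (b k beta : R)
  (w : nat -> nat -> R) (J gam eta : nat -> R) (eps : R) : R :=
  let Q := Qc m a b k beta w J gam in
  (m%:R * eps)^-1 *
  (m%:R * Wspread m w * beta + spread m a * Num.sqrt Q
   + k * spread m eta * (Q * Num.sqrt Q) + spread m J).

Definition is_solution (R : realType) (m : nat) (a : nat -> R) (b k P : R)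
  (w : nat -> nat -> R) (f phi : nat -> R -> R) (J gam : nat -> R)
  (u : nat -> R -> R) (rho : R -> R) : Prop :=
  (forall i, (i < m)%N -> u i x @[x --> 0^'+] --> u i 0)
  /\ rho x @[x --> 0^'+] --> rho 0
  /\ forall t : R, 0 < t ->
     (forall i, (i < m)%N ->
        derivable (u i) t 1 /\
        derive1 (u i) t = - a i * u i t + \sum_(j < m) w i j * f j (u j t)
                      + k * phi i (rho t) * u i t + J i
                      - P * \sum_(j < m) (u i t - u j t))
     /\ derivable rho t 1
     /\ derive1 rho t = \sum_(i < m) gam i * u i t - b * rho t.

(* Main.v *)
Require Import Defs.
From mathcomp Require Import all_boot all_order all_algebra.
From mathcomp Require Import all_classical all_reals all_analysis.
From mathcomp Require Import ring lra.
Import Order.TTheory GRing.Theory Num.Theory.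
Import numFieldNormedType.Exports.
Local Open Scope classical_set_scope.
Local Open Scope ring_scope.

Section S.
Context {R : realType}.

Lemma is_derive_expc (c x : R) : is_derive x 1 (fun s : R => expR (c * s)) (expR (c * x) * c).
Proof.
have h1 : is_derive x 1 (fun s : R => c * s) c.
  have := @is_deriveZ R R R id c x 1 1 (is_derive_id x 1).
  by rewrite /GRing.scale /= mulr1.
exact: (@is_derive1_comp R expR (fun s => c * s) x _ _ (is_derive_expR _) h1).
Qed.

Lemma cmp (y dy : R -> R) (T0 c K : R) : 0 < c -> 0 <= K ->
 (forall t, T0 <= t -> is_derive t 1 y (dy t)) ->
 (forall t, T0 <= t -> dy t <= - c * y t + K) ->
 forall t, T0 <= t -> y t <= expR (- c * (t - T0)) * y T0 + K / c.
Proof.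
move=> c0 K0 dery hdy t tT.
pose z := fun s => expR (c * s) * (y s - K / c).
have dz s : T0 <= s -> is_derive s 1 z (expR (c * s) * dy s + (y s - K / c) * (expR (c * s) * c)).
  move=> sT.
  have hB : is_derive s 1 (fun r => y r - K / c) (dy s).
    have := @is_deriveB R R R y (cst (K / c)) s 1 (dy s) 0 (dery s sT) (is_derive_cst _ _ _).
    by rewrite subr0.
  have := @is_deriveM R R (fun r => expR (c * r)) (fun r => y r - K / c) s 1 _ _ (is_derive_expc c s) hB.
  by rewrite /GRing.scale /= [_ * (_ * c)]mulrC.
have zle : z t <= z T0.
  have := @ler0_derive1_le_cc R z T0 t.
  have H1 : forall x, x \in `]T0, t[ -> derivable z x 1.
    move=> x; rewrite in_itv /= => /andP[/ltW h _].
    by have [] := dz x h.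
  have H2 : forall x, x \in `]T0, t[ -> derive1 z x <= 0.
    move=> x; rewrite in_itv /= => /andP[/ltW h _].
    rewrite derive1E (@derive_val _ _ _ _ _ _ _ (dz x h)).
    have := hdy x h.
    have ep := expR_gt0 (c * x).
    move=> hh.
    have -> : expR (c * x) * dy x + (y x - K / c) * (expR (c * x) * c)
       = expR (c * x) * (dy x + c * y x - K).
      by field; rewrite gt_eqF.
    rewrite pmulr_rle0 //; lra.
  move=> /(_ H1 H2); apply.
  - apply: derivable_within_continuous => x; rewrite in_itv /= => /andP[h _].
    by have [] := dz x h.
  - by rewrite in_itv /= lexx tT.
  - by rewrite in_itv /= lexx tT.
  - exact: tT.
move: zle; rewrite /z.
have ep := expR_gt0 (c * t).
have e2 : expR (- c * (t - T0)) = expR (c * T0) / expR (c * t).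
  by rewrite -expRB; congr expR; ring.
have e1 : expR (- c * (t - T0)) <= 1.
  rewrite -expR0 ler_expR; nra.
have e0 := expR_gt0 (- c * (t - T0)).
move=> h.
have : y t - K / c <= expR (- c * (t - T0)) * (y T0 - K / c).
  rewrite e2 mulrAC ler_pdivlMr //.
  by rewrite mulrC.
have Kc : 0 <= K / c by rewrite divr_ge0 // ltW.
nra.
Qed.

Lemma exp_small (c e Y T : R) : 0 < c -> 0 < e -> 0 <= Y ->
  exists T0, T <= T0 /\ forall t, T0 <= t -> expR (- c * (t - T)) * Y <= e.
Proof.
move=> c0 e0 Y0.
set L := ln (e / (Y + 1)).
exists (T + `|L| / c); split.
  by rewrite lerDl divr_ge0 // ltW.
move=> t tT.
have Y1 : 0 < Y + 1 by lra.
have q0 : 0 < e / (Y + 1) by rewrite divr_gt0.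
have h1 : - c * (t - T) <= L.
  have : `|L| / c <= t - T by lra.
  rewrite ler_pdivrMr // => h.
  have := ler_norm (- L); rewrite normrN; nra.
have h2 : expR (- c * (t - T)) <= e / (Y + 1).
  by rewrite -[X in _ <= X](lnK q0) ler_expR.
have h3 := expR_gt0 (- c * (t - T)).
have : expR (- c * (t - T)) * (Y + 1) <= e.
  by rewrite -ler_pdivlMr.
nra.
Qed.

Lemma le_bigmax_o n (F : 'I_n -> R) (i : 'I_n) : F i <= \big[Num.max/0]_(j < n) F j.
Proof. by rewrite (bigD1 i) //= le_max lexx. Qed.
Arguments le_bigmax_o {n}.

Lemma bigmax_ge0 n (F : 'I_n -> R) : 0 <= \big[Num.max/0]_(j < n) F j.
Proof. by elim/big_rec: _ => // i x _ hx; rewrite le_max hx orbT. Qed.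

Lemma spread_le m (x : nat -> R) i j : (i < m)%N -> (j < m)%N -> `|x i - x j| <= spread m x.
Proof.
move=> hi hj; rewrite /spread.
apply: (le_trans _ (le_bigmax_o (fun i0 : 'I_m => \big[Num.max/0]_(j0 < m) `|x i0 - x j0|) (Ordinal hi))).
exact: (le_bigmax_o (fun j0 : 'I_m => `|x i - x j0|) (Ordinal hj)).
Qed.

Lemma Wspread_le m (w : nat -> nat -> R) i j l : (i < m)%N -> (j < m)%N -> (l < m)%N ->
  `|w i l - w j l| <= Wspread m w.
Proof.
move=> hi hj hl; rewrite /Wspread.
apply: (le_trans _ (le_bigmax_o (fun i0 : 'I_m => \big[Num.max/0]_(j0 < m) \big[Num.max/0]_(l0 < m) `|w i0 l0 - w j0 l0|) (Ordinal hi))).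
apply: (le_trans _ (le_bigmax_o (fun j0 : 'I_m => \big[Num.max/0]_(l0 < m) `|w i l0 - w j0 l0|) (Ordinal hj))).
exact: (le_bigmax_o (fun l0 : 'I_m => `|w i l0 - w j l0|) (Ordinal hl)).
Qed.

Lemma Wmax_le m (w : nat -> nat -> R) i j : (i < m)%N -> (j < m)%N -> `|w i j| <= Wmax m w.
Proof.
move=> hi hj; rewrite /Wmax.
apply: (le_trans _ (le_bigmax_o (fun i0 : 'I_m => \big[Num.max/0]_(j0 < m) `|w i0 j0|) (Ordinal hi))).
exact: (le_bigmax_o (fun j0 : 'I_m => `|w i j0|) (Ordinal hj)).
Qed.

Lemma Jmax_le m (J : nat -> R) i : (i < m)%N -> `|J i| <= Jmax m J.
Proof. by move=> hi; exact: (le_bigmax_o (fun i0 : 'I_m => `|J i0|) (Ordinal hi)). Qed.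

Lemma gamma2_le m (g : nat -> R) i : (i < m)%N -> g i ^+ 2 <= gamma2 m g.
Proof. by move=> hi; exact: (le_bigmax_o (fun i0 : 'I_m => g i0 ^+ 2) (Ordinal hi)). Qed.

Lemma gamma2_ge0 m (g : nat -> R) : 0 <= gamma2 m g.
Proof. exact: bigmax_ge0. Qed.
Lemma Wmax_ge0 m (w : nat -> nat -> R) : 0 <= Wmax m w.
Proof. exact: bigmax_ge0. Qed.
Lemma Jmax_ge0 m (J : nat -> R) : 0 <= Jmax m J.
Proof. exact: bigmax_ge0. Qed.
Lemma spread_ge0 m (x : nat -> R) : 0 <= spread m x.
Proof. exact: bigmax_ge0. Qed.
Lemma Wspread_ge0 m (w : nat -> nat -> R) : 0 <= Wspread m w.
Proof. exact: bigmax_ge0. Qed.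

Lemma amin_le m (a : nat -> R) i : (i < m)%N -> amin m a <= a i.
Proof. by move=> hi; rewrite /amin (bigD1 (Ordinal hi)) //= ge_min lexx. Qed.

Lemma amin_gt m (a : nat -> R) k : (0 < m)%N -> (forall i, (i < m)%N -> k < a i) -> k < amin m a.
Proof.
move=> m0 h; rewrite /amin; elim/big_ind: _.
- exact: h.
- by move=> x y hx hy; rewrite lt_min hx hy.
- by move=> i _; apply: h.
Qed.

Lemma coupling m (x : nat -> R) : 0 <= \sum_(i < m) x i * \sum_(j < m) (x i - x j).
Proof.
set S := \sum_(i < m) _.
have e1 : S = \sum_(i < m) \sum_(j < m) x i * (x i - x j).
  by apply: eq_bigr => i _; rewrite mulr_sumr.
have e2 : S = \sum_(i < m) \sum_(j < m) x j * (x j - x i).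
  by rewrite e1 exchange_big.
have : S + S = \sum_(i < m) \sum_(j < m) (x i - x j) ^+ 2.
  rewrite {1}e1 e2 -big_split /=; apply: eq_bigr => i _.
  rewrite -big_split /=; apply: eq_bigr => j _; ring.
have : 0 <= \sum_(i < m) \sum_(j < m) (x i - x j) ^+ 2.
  by apply: sumr_ge0 => i _; apply: sumr_ge0 => j _; apply: sqr_ge0.
lra.
Qed.

Lemma sum_const_sub m (x : R) (y : nat -> R) :
  \sum_(j < m) (x - y j) = x * m%:R - \sum_(j < m) y j.
Proof. by rewrite sumrB sumr_const card_ord mulr_natr. Qed.

Lemma cs m (y : nat -> R) : (\sum_(i < m) y i) ^+ 2 <= m%:R * \sum_(i < m) y i ^+ 2.
Proof.
have := coupling m y.
have -> : \sum_(i < m) y i * \sum_(j < m) (y i - y j)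
   = m%:R * \sum_(i < m) y i ^+ 2 - (\sum_(i < m) y i) ^+ 2.
  under eq_bigr => i _ do rewrite sum_const_sub mulrBr.
  rewrite sumrB -mulr_suml; congr (_ - _); first (rewrite mulr_sumr; apply: eq_bigr => i _; ring).
  all: try ring.
lra.
Qed.

Lemma sq_le_sum m (y : nat -> R) i : (i < m)%N -> y i ^+ 2 <= \sum_(l < m) y l ^+ 2.
Proof.
move=> hi; rewrite (bigD1 (Ordinal hi)) //= lerDl.
by apply: sumr_ge0 => l _; apply: sqr_ge0.
Qed.

Lemma is_derive_bsum n (h : nat -> R -> R) (dh : nat -> R) (x : R) :
  (forall i, (i < n)%N -> is_derive x 1 (h i) (dh i)) ->
  is_derive x 1 (fun t => \sum_(i < n) h i t) (\sum_(i < n) dh i).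
Proof.
elim: n => [|n IH] hd.
  under [fun t => _]funext => t do rewrite big_ord0.
  by rewrite big_ord0; apply: is_derive_cst.
under [fun t => _]funext => t do rewrite big_ord_recr /=.
rewrite big_ord_recr /=.
have h1 := IH (fun i hi => hd i (ltnW hi)).
have h2 := hd n (ltnSn n).
exact: (is_deriveD h1 h2).
Qed.

Lemma is_derive_sq (f : R -> R) (df x : R) : is_derive x 1 f df ->
  is_derive x 1 (fun t => f t ^+ 2) (2 * f x * df).
Proof.
move=> h; have := is_deriveM h h.
have -> : f x *: df + f x *: df = 2 * f x * df by rewrite /GRing.scale /=; ring.
by [].
Qed.

Lemma young (c x y : R) : 0 < c -> 2 * x * y <= c * x ^+ 2 + y ^+ 2 / c.
Proof.
move=> c0.
have e : y ^+ 2 / c * c = y ^+ 2 by field; rewrite gt_eqF.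
have h : 0 <= (c * x - y) ^+ 2 := sqr_ge0 _.
have : c * (2 * x * y) <= c * (c * x ^+ 2 + y ^+ 2 / c) by nra.
by rewrite ler_pM2l.
Qed.

Lemma sum_bound m (F : nat -> R) B : (forall j, (j < m)%N -> `|F j| <= B) ->
  `|\sum_(j < m) F j| <= m%:R * B.
Proof.
move=> h; apply: le_trans (ler_norm_sum _ _ _) _.
have -> : m%:R * B = \sum_(j < m) B by rewrite sumr_const card_ord mulr_natl.
by apply: ler_sum => j _; apply: h.
Qed.

Lemma normD_le (x y B1 B2 : R) : `|x| <= B1 -> `|y| <= B2 -> `|x + y| <= B1 + B2.
Proof. move=> h1 h2; apply: le_trans (ler_normD x y) _; exact: lerD. Qed.

Lemma min1_bounds (x : R) : 0 < x -> 0 < Num.min x 1 /\ Num.min x 1 <= 1.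
Proof. by move=> x0; rewrite lt_min x0 ltr01 ge_min lexx orbT. Qed.

Lemma Qbound m (a : nat -> R) (b k beta : R) (w : nat -> nat -> R) (J gam : nat -> R) : 0 < b -> k < amin m a ->
  1 + (1 + m%:R * gamma2 m gam / b ^+ 2) *
      (m%:R * (m%:R * Wmax m w * beta + Jmax m J) ^+ 2 / (amin m a - k) ^+ 2)
  <= Qc m a b k beta w J gam.
Proof.
move=> b0 ka.
rewrite /Qc /C2 /mu0 /C1.
set U := (m%:R * (m%:R * Wmax m w * beta + Jmax m J) ^+ 2 / (amin m a - k) ^+ 2).
set B := (m%:R * gamma2 m gam / b + b).
have g0 := gamma2_ge0 m gam.
have B0 : 0 < B by rewrite /B; apply: ltr_wpDl => //; rewrite divr_ge0 // ?mulr_ge0 // ltW.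
have ak : 0 < amin m a - k by rewrite subr_gt0.
have U0 : 0 <= U by apply: divr_ge0; [apply: mulr_ge0 => //; exact: sqr_ge0 | exact: sqr_ge0].
set C := (amin m a - k)^-1 * B.
have C0 : 0 < C by rewrite /C mulr_gt0 // invr_gt0.
have C1 : 0 < C^-1 by rewrite invr_gt0.
have [p10 p11] := min1_bounds _ C1.
have [p20 p21] := min1_bounds _ C0.
set p1 := Num.min C^-1 1 in p10 p11 *.
set p2 := Num.min C 1 in p20 p21 *.
set X := B * U / b.
have X0 : 0 <= X by apply: divr_ge0; [apply: mulr_ge0 => //; exact: ltW | exact: ltW].
have e1 : (1 + m%:R * gamma2 m gam / b ^+ 2) * U = X.
  by rewrite /X /B; field; rewrite gt_eqF.
have e2 : B * U / (b * p1 * p2) = X / (p1 * p2).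
  by rewrite /X; field; rewrite !gt_eqF.
rewrite e1 e2 lerD2l.
have pp : 0 < p1 * p2 by rewrite mulr_gt0.
rewrite ler_pdivlMr //.
have : p1 * p2 <= 1 by rewrite -[1]mulr1; apply: ler_pM => //; apply: ltW.
nra.
Qed.
End S.
Theorem corollary3p2 (R : realType) (m : nat) (hm : (2 <= m)%N)
  (a : nat -> R) (b beta k P : R) (eta : nat -> R)
  (w : nat -> nat -> R) (J gam : nat -> R) (f phi : nat -> R -> R)
  (hP : 0 < P) (ha : forall i, (i < m)%N -> 0 < a i) (hb : 0 < b)
  (hbeta : 0 < beta) (heta : forall i, (i < m)%N -> 0 < eta i) (hk : 0 < k)
  (hak : forall i, (i < m)%N -> k < a i)
  (hfL : forall i, (i < m)%N -> locally_lipschitz (f i))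
  (hphiL : forall i, (i < m)%N -> locally_lipschitz (phi i))
  (hfb : forall i, (i < m)%N -> forall s, `|f i s| <= beta)
  (hphi : forall i, (i < m)%N -> forall s, phi i s = 1 - eta i * s ^+ 2)
  (eps : R) (heps : 0 < eps)
  (hPs : Pstar m a b k beta w J gam eta eps < P) :
  let mu := amin m a - k + P in
  exists D : R, 0 <= D /\ D < eps /\
    forall (u : nat -> R -> R) (rho : R -> R),
      is_solution m a b k P w f phi J gam u rho ->
      (* limsup_{t -> oo} |u_i(t) - u_j(t)| <= D < eps *)
      (forall i j, (i < m)%N -> (j < m)%N -> forall d : R, 0 < d ->
         exists T0 : R, forall t, T0 < t -> `|u i t - u j t| <= D + d)
      /\
      (exists T : R, 0 <= T /\ forall t : R, T < t ->
         forall i j, (i < m)%N -> (j < m)%N -> i != j ->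
           (u i t - u j t) ^+ 2
             <= expR (- mu * (t - T)) * (u i T - u j T) ^+ 2 + D ^+ 2).
Proof.
move=> mu.
have m0 : (0 < m)%N by apply: leq_trans hm.
have mpos : (0 : R) < m%:R by rewrite ltr0n.
have ka := amin_gt m a k m0 hak.
have ak : 0 < amin m a - k by rewrite subr_gt0.
have hQ := Qbound m a b k beta w J gam hb ka.
set M := m%:R * Wmax m w * beta + Jmax m J in hQ.
set U := (m%:R * M ^+ 2 / (amin m a - k) ^+ 2) in hQ.
set g := m%:R * gamma2 m gam / b ^+ 2 in hQ.
set Q := Qc m a b k beta w J gam in hQ *.
have g2_0 := gamma2_ge0 m gam.
have U0 : 0 <= U by apply: divr_ge0; [apply: mulr_ge0 => //; exact: sqr_ge0 | exact: sqr_ge0].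
have g0 : 0 <= g by apply: divr_ge0; [apply: mulr_ge0 => //; exact: ltW | exact: sqr_ge0].
have gU0 : 0 <= g * U by apply: mulr_ge0.
have Q1 : 1 <= Q by nra.
have sQ0 : 0 <= Num.sqrt Q by apply: sqrtr_ge0.
have Q0 : 0 <= Q by lra.
set G0 := m%:R * Wspread m w * beta + spread m a * Num.sqrt Q
   + k * spread m eta * (Q * Num.sqrt Q) + spread m J.
have G00 : 0 <= G0.
  have := Wspread_ge0 m w; have := spread_ge0 m a; have := spread_ge0 m eta;
  have := spread_ge0 m J => h1 h2 h3 h4.
  rewrite /G0; apply: addr_ge0; [apply: addr_ge0; [apply: addr_ge0|]|] => //;
  repeat apply: mulr_ge0 => //; exact: ltW.
set c0 := amin m a - k + P * m%:R.
have c00 : 0 < c0 by rewrite /c0; apply: addr_gt0 => //; apply: mulr_gt0.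
have me : 0 < m%:R * eps by apply: mulr_gt0.
have hG : G0 < m%:R * eps * P.
  move: hPs; rewrite /Pstar /= => h.
  have {}h : (m%:R * eps)^-1 * G0 < P := h.
  by rewrite -(ltr_pM2l me) mulrA mulfV ?mul1r ?gt_eqF in h.
exists (G0 / c0); split; first by apply: divr_ge0 => //; apply: ltW.
split.
  rewrite ltr_pdivrMr //.
  have : 0 < eps * (amin m a - k) by apply: mulr_gt0.
  rewrite /c0; nra.
move=> u rho [_ [_ hder]].
have hu : forall t : R, 0 < t -> forall i, (i < m)%N ->
   is_derive t 1 (u i) (derive1 (u i) t) /\
   derive1 (u i) t = - a i * u i t + \sum_(j < m) w i j * f j (u j t)
        + k * (1 - eta i * rho t ^+ 2) * u i t + J i
        - P * \sum_(j < m) (u i t - u j t).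
  move=> t t0 i hi; have [/(_ i hi) [d e] _] := hder t t0.
  split; first by rewrite derive1E; exact: derivableP.
  by rewrite e hphi.
have hr : forall t : R, 0 < t -> is_derive t 1 rho (derive1 rho t) /\
   derive1 rho t = \sum_(i < m) gam i * u i t - b * rho t.
  move=> t t0; have [_ [d e]] := hder t t0.
  by split; first by rewrite derive1E; exact: derivableP.
have hAJ : forall (t : R) i, (i < m)%N ->
    `|\sum_(j < m) w i j * f j (u j t) + J i| <= M.
  move=> t i hi.
  rewrite /M; apply: normD_le; last exact: Jmax_le.
  rewrite -mulrA; apply: (sum_bound m (fun j => w i j * f j (u j t))) => j hj; rewrite normrM.
  apply: ler_pM => //; [exact: Wmax_le | exact: hfb].
set E := fun t : R => \sum_(i < m) u i t ^+ 2.
have E0 : forall t, 0 <= E t by move=> t; apply: sumr_ge0 => i _; exact: sqr_ge0.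
have hEd : forall t : R, 0 < t ->
    is_derive t 1 E (\sum_(i < m) 2 * u i t * derive1 (u i) t).
  move=> t t0.
  apply: (@is_derive_bsum _ m (fun i s => u i s ^+ 2) (fun i => 2 * u i t * derive1 (u i) t) t) => i hi.
  by apply: is_derive_sq; exact: (hu t t0 i hi).1.
have hEb : forall t : R, 0 < t -> \sum_(i < m) 2 * u i t * derive1 (u i) t
    <= - (amin m a - k) * E t + m%:R * M ^+ 2 / (amin m a - k).
  move=> t t0.
  have step : forall i : 'I_m, 2 * u i t * derive1 (u i) t <=
      (- (amin m a - k) * u i t ^+ 2 + M ^+ 2 / (amin m a - k))
      - 2 * P * (u i t * \sum_(j < m) (u i t - u j t)).
    move=> i; have hi := ltn_ord i.
    rewrite (hu t t0 i hi).2.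
    set V := \sum_(j < m) (u i t - u j t).
    set A := \sum_(j < m) w i j * f j (u j t).
    have hA := hAJ t i hi; rewrite -/A in hA.
    have y := young (amin m a - k) `|u i t| M ak.
    rewrite real_normK ?num_real // in y.
    have h1 : u i t * (A + J i) <= `|u i t| * M.
      apply: le_trans (ler_norm _) _; rewrite normrM; apply: ler_wpM2l => //.
    have ai := amin_le m a i hi.
    have f1 : 0 <= (a i - amin m a) * u i t ^+ 2 by apply: mulr_ge0; [lra | exact: sqr_ge0].
    have f2 : 0 <= k * (eta i * rho t ^+ 2 * u i t ^+ 2).
      apply: mulr_ge0; first exact: ltW.
      apply: mulr_ge0; [apply: mulr_ge0; [exact: ltW (heta i hi) | exact: sqr_ge0] | exact: sqr_ge0].
    nra.
  apply: le_trans (ler_sum _ (fun i _ => step i)) _.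
  rewrite sumrB big_split /= -!mulr_sumr sumr_const card_ord -/(E t).
  have hc := coupling m (fun l => u l t).
  rewrite -mulr_natr.
  nra.
set dl := (1 + g)^-1.
have dl0 : 0 < dl by rewrite /dl invr_gt0; lra.
have dlg : dl * (1 + g) = 1 by rewrite /dl mulVf // gt_eqF //; lra.
have dl1 : dl <= 1 by nra.
have [T1 [T11 hT1]] : exists T1, 1 <= T1 /\ forall t, T1 <= t -> E t <= U + dl.
  have K0 : 0 <= m%:R * M ^+ 2 / (amin m a - k).
    by apply: divr_ge0; [apply: mulr_ge0 => //; exact: sqr_ge0 | exact: ltW].
  have cE := cmp E (fun t => \sum_(i < m) 2 * u i t * derive1 (u i) t) 1 (amin m a - k) (m%:R * M ^+ 2 / (amin m a - k)) ak K0
    (fun t ht => hEd t (lt_le_trans ltr01 ht)) (fun t ht => hEb t (lt_le_trans ltr01 ht)).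
  have [T1 [T1ge hT]] := exp_small (amin m a - k) dl (E 1) 1 ak dl0 (E0 1).
  exists T1; split => // t tT.
  have := cE t (le_trans T1ge tT); have := hT t tT.
  have -> : m%:R * M ^+ 2 / (amin m a - k) / (amin m a - k) = U.
    by rewrite /U; field; rewrite gt_eqF.
  lra.
have [T2 [T21 hT2]] : exists T2, T1 <= T2 /\ forall t, T2 <= t -> rho t ^+ 2 <= Q.
  set K := m%:R * gamma2 m gam * (U + dl) / b.
  have K0 : 0 <= K.
    apply: divr_ge0; [apply: mulr_ge0; [apply: mulr_ge0 => // | lra] | exact: ltW].
  have hRd : forall t, T1 <= t -> is_derive t 1 (fun s => rho s ^+ 2) (2 * rho t * derive1 rho t).
    move=> t tT; apply: is_derive_sq; apply: (hr t _).1; lra.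
  have hRb : forall t, T1 <= t -> 2 * rho t * derive1 rho t <= - b * rho t ^+ 2 + K.
    move=> t tT; have t0 : 0 < t by lra.
    rewrite (hr t t0).2.
    set s := \sum_(i < m) gam i * u i t.
    have y := young b (rho t) s hb.
    have cs1 := cs m (fun i => gam i * u i t).
    have cs2 : \sum_(i < m) (gam i * u i t) ^+ 2 <= gamma2 m gam * E t.
      rewrite /E mulr_sumr; apply: ler_sum => i _; rewrite exprMn.
      apply: ler_wpM2r; [exact: sqr_ge0 | exact: gamma2_le].
    have hE := hT1 t tT.
    have s2 : s ^+ 2 <= m%:R * gamma2 m gam * (U + dl).
      apply: le_trans cs1 _; rewrite -mulrA; apply: ler_wpM2l => //.
      apply: le_trans cs2 _; apply: ler_wpM2l => //.
    have s3 : s ^+ 2 / b <= K by rewrite /K ler_pM2r // invr_gt0.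
    nra.
  have cR := cmp (fun s => rho s ^+ 2) (fun t => 2 * rho t * derive1 rho t) T1 b K hb K0 hRd hRb.
  have [T2 [T2ge hT]] := exp_small b dl (rho T1 ^+ 2) T1 hb dl0 (sqr_ge0 _).
  exists T2; split => // t tT.
  have := cR t (le_trans T2ge tT); have := hT t tT.
  have -> : K / b = g * (U + dl) by rewrite /K /g; field; rewrite gt_eqF.
  move=> h1 h2.
  have : g * (U + dl) + dl = 1 + g * U by nra.
  lra.
have hu2 : forall t, T2 <= t -> forall l, (l < m)%N -> `|u l t| <= Num.sqrt Q.
  move=> t tT l hl; rewrite -sqrtr_sqr; apply: ler_wsqrtr.
  apply: le_trans (sq_le_sum m (fun l => u l t) l hl) _.
  have := hT1 t (le_trans T21 tT); rewrite /E; nra.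
have hmain : forall i j, (i < m)%N -> (j < m)%N -> forall t, T2 <= t ->
    (u i t - u j t) ^+ 2 <= expR (- c0 * (t - T2)) * (u i T2 - u j T2) ^+ 2 + (G0 / c0) ^+ 2.
  move=> i j hi hj.
  have K0 : 0 <= G0 ^+ 2 / c0 by apply: divr_ge0; [exact: sqr_ge0 | exact: ltW].
  have hyd : forall t, T2 <= t -> is_derive t 1 (fun s => (u i s - u j s) ^+ 2)
      (2 * (u i t - u j t) * (derive1 (u i) t - derive1 (u j) t)).
    move=> t tT; have t0 : 0 < t by lra.
    apply: (is_derive_sq (fun s => u i s - u j s)).
    exact: (is_deriveB (hu t t0 i hi).1 (hu t t0 j hj).1).
  have hyb : forall t, T2 <= t ->
      2 * (u i t - u j t) * (derive1 (u i) t - derive1 (u j) t)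
      <= - c0 * (u i t - u j t) ^+ 2 + G0 ^+ 2 / c0.
    move=> t tT; have t0 : 0 < t by lra.
    rewrite (hu t t0 i hi).2 (hu t t0 j hj).2 (sum_const_sub m (u i t) (fun l => u l t)) (sum_const_sub m (u j t) (fun l => u l t)).
    set Ai := \sum_(l < m) w i l * f l (u l t).
    set Aj := \sum_(l < m) w j l * f l (u l t).
    set S := \sum_(l < m) u l t.
    set G := (Ai - Aj) + (a j - a i) * u j t + k * (eta j - eta i) * rho t ^+ 2 * u j t + (J i - J j).
    have hGb : `|G| <= G0.
      have tT2 := tT.
      have uj := hu2 t tT2 j hj.
      have r2 := hT2 t tT2.
      have r20 : 0 <= rho t ^+ 2 := sqr_ge0 _.
      rewrite /G /G0; apply: normD_le; [apply: normD_le; [apply: normD_le|]|].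
      - have -> : Ai - Aj = \sum_(l < m) (w i l - w j l) * f l (u l t).
          by rewrite /Ai /Aj -sumrB; apply: eq_bigr => l _; ring.
        rewrite -mulrA; apply: (sum_bound m (fun l => (w i l - w j l) * f l (u l t))) => l hl.
        rewrite normrM; apply: ler_pM => //; [exact: Wspread_le | exact: hfb].
      - rewrite normrM; apply: ler_pM => //; exact: spread_le.
      - rewrite !normrM (ger0_norm (ltW hk)) -expr2 real_normK ?num_real // !mulrA.
        have e1 : `|eta j - eta i| <= spread m eta by exact: spread_le.
        have p1 : k * `|eta j - eta i| <= k * spread m eta by apply: ler_wpM2l => //; exact: ltW.
        have k0 : 0 <= k * `|eta j - eta i| by apply: mulr_ge0 => //; exact: ltW.
        have p2 := ler_pM k0 r20 p1 r2.
        have k1 : 0 <= k * `|eta j - eta i| * rho t ^+ 2 by apply: mulr_ge0.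
        have -> : k * `|eta j - eta i| * rho t * rho t * `|u j t| = k * `|eta j - eta i| * rho t ^+ 2 * `|u j t| by ring.
        exact: (ler_pM k1 (normr_ge0 _) p2 uj).
      - exact: spread_le.
    have y := young c0 `|u i t - u j t| G0 c00.
    rewrite real_normK ?num_real // in y.
    have h1 : (u i t - u j t) * G <= `|u i t - u j t| * G0.
      apply: le_trans (ler_norm _) _; rewrite normrM; apply: ler_wpM2l => //.
    have ai := amin_le m a i hi.
    have f1 : 0 <= (a i - amin m a) * (u i t - u j t) ^+ 2 by apply: mulr_ge0; [lra | exact: sqr_ge0].
    have f2 : 0 <= k * (eta i * rho t ^+ 2 * (u i t - u j t) ^+ 2).
      apply: mulr_ge0; first exact: ltW.
      apply: mulr_ge0; [apply: mulr_ge0; [exact: ltW (heta i hi) | exact: sqr_ge0] | exact: sqr_ge0].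
    have eq : 2 * (u i t - u j t) *
       (- a i * u i t + Ai + k * (1 - eta i * rho t ^+ 2) * u i t + J i - P * (u i t * m%:R - S) -
        (- a j * u j t + Aj + k * (1 - eta j * rho t ^+ 2) * u j t + J j - P * (u j t * m%:R - S)))
      = - 2 * (a i - k + k * eta i * rho t ^+ 2 + P * m%:R) * (u i t - u j t) ^+ 2
        + 2 * ((u i t - u j t) * G) by rewrite /G; ring.
    rewrite eq; rewrite /c0 in y *; lra.
  have cY := cmp (fun s => (u i s - u j s) ^+ 2) _ T2 c0 (G0 ^+ 2 / c0) c00 K0 hyd hyb.
  move=> t tT; have := cY t tT.
  have -> : G0 ^+ 2 / c0 / c0 = (G0 / c0) ^+ 2 by field; rewrite gt_eqF.
  by [].
have D0 : 0 <= G0 / c0 by apply: divr_ge0 => //; exact: ltW.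
split.
  move=> i j hi hj d d0.
  have d20 : 0 < d ^+ 2 by rewrite exprn_gt0.
  have [T0 [T0ge hT]] := exp_small c0 (d ^+ 2) ((u i T2 - u j T2) ^+ 2) T2 c00 d20 (sqr_ge0 _).
  exists T0 => t tT.
  have tT' : T0 <= t by exact: ltW.
  have h1 := hmain i j hi hj t (le_trans T0ge tT').
  have h2 := hT t tT'.
  have h3 : `|u i t - u j t| ^+ 2 <= (G0 / c0 + d) ^+ 2.
    rewrite real_normK ?num_real //; nra.
  have := normr_ge0 (u i t - u j t).
  nra.
exists T2; split; first lra.
move=> t tT i j hi hj _.
have := hmain i j hi hj t (ltW tT).
have e : expR (- c0 * (t - T2)) <= expR (- mu * (t - T2)).
  rewrite ler_expR /mu /c0.
  have : P <= P * m%:R.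
    rewrite -[X in X <= _]mulr1; apply: ler_wpM2l; first exact: ltW.
    by rewrite ler1n; apply: leq_trans hm.
  nra.
have := sqr_ge0 (u i T2 - u j T2).
nra.
Qed.
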